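(* Let $\alpha\ge6$ and $f_\alpha(y)=\sum_{k,l\in\mathbb{Z}}e^{-\pi\alpha\phi_{k,l}(y)}$. Then $f_\alpha''(y)<0$ for all $y\in\big[\tfrac{\sqrt3}2,\tfrac{\sqrt3}2+\tfrac1{3\sqrt\alpha}\big]$.
   Context: For $y>0$ and $(k,l)\in\mathbb{Z}^2$: $\phi_{k,l}(y)=\frac{(2k+l+1)^2}{4y}+y\big(l+\frac12-\frac1{8y^2}\big)^2$. *)

(* Defs.v *)
From Stdlib Require Import Reals ZArith Lra.
From Coquelicot Require Import Coquelicot.
Open Scope R_scope.

Definition phi (k l : Z) (y : R) : R :=
  (2 * IZR k + IZR l + 1) ^ 2 / (4 * y)
  + y * (IZR l + 1 / 2 - 1 / (8 * y ^ 2)) ^ 2.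

(* A bijection nat -> Z: 0,1,2,3,4,... |-> 0,-1,1,-2,2,... *)
Definition z_enum (n : nat) : Z :=
  if Nat.even n then Z.of_nat (Nat.div2 n) else (- Z.of_nat (Nat.div2 (S n)))%Z.

(* f_alpha(y) = sum_{k,l in Z} exp(-pi alpha phi_{k,l}(y)); the terms are
   positive and summable for y > 0, so the (iterated) sum along the
   enumeration z_enum equals the unordered double sum over Z^2. *)
Definition f_alpha (alpha y : R) : R :=
  Series (fun n => Series (fun m =>
    exp (- PI * alpha * phi (z_enum n) (z_enum m) y))).

(* Main.v *)
Require Import Defs.
From Stdlib Require Import Reals ZArith Lra Lia Psatz Arith Classical.
From Coquelicot Require Import Coquelicot.
Open Scope R_scope.

Lemma tail_small (M : nat -> R) (eps : R) : ex_series M -> 0 < eps ->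
  exists N, Rabs (Series (fun k => M (S N + k)%nat)) < eps.
Proof.
  intros HM He.
  pose proof (Series_correct M HM) as H.
  unfold is_series in H.
  destruct (proj1 (filterlim_locally _ _) H (mkposreal eps He)) as [N HN].
  exists N.
  rewrite (Series_incr_n M (S N)) in HN; [|lia|exact HM].
  specialize (HN N (le_n _)).
  simpl pred in HN.
  rewrite sum_n_Reals in HN.
  revert HN. unfold ball; simpl; unfold AbsRing_ball, abs, minus, plus, opp; simpl.
  intros HN. 
  replace (sum_f_R0 M N + - (sum_f_R0 M N + Series (fun k : nat => M (S (N + k)))))
    with (- Series (fun k : nat => M (S N + k)%nat)) in HN by (simpl; ring).
  rewrite Rabs_Ropp in HN. exact HN.
Qed.

Lemma mvt_bound (f df : R -> R) (lo hi K x z : R) :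
  (forall t, lo < t < hi -> is_derive f t (df t)) ->
  (forall t, lo < t < hi -> Rabs (df t) <= K) ->
  lo < x < hi -> lo < z < hi -> Rabs (f z - f x) <= K * Rabs (z - x).
Proof.
  intros Hd Hb Hx Hz.
  assert (Hin : forall t, Rmin x z <= t <= Rmax x z -> lo < t < hi).
  { intros t Ht. unfold Rmin, Rmax in Ht. destruct (Rle_dec x z); lra. }
  destruct (MVT_gen f x z df) as [c [Hc Heq]].
  - intros t Ht. apply Hd, Hin. lra.
  - intros t Ht. apply continuity_pt_filterlim.
    apply (ex_derive_continuous f t). exists (df t). apply Hd, Hin, Ht.
  - rewrite Heq, Rabs_mult. apply Rmult_le_compat_r; [apply Rabs_pos|].
    apply Hb, Hin, Hc.
Qed.

Lemma ex_series_dom (u M : nat -> R) : (forall n, Rabs (u n) <= M n) -> ex_series M -> ex_series u.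
Proof. intros H HM. apply (ex_series_le u M); [|exact HM]. intros n. apply H. Qed.

Lemma series_derive (g d : nat -> R -> R) (M : nat -> R) (lo hi x : R) :
  lo < x < hi ->
  (forall n z, lo < z < hi -> is_derive (g n) z (d n z)) ->
  (forall n z, lo < z < hi -> Rabs (d n z) <= M n) ->
  ex_series M ->
  (forall z, lo < z < hi -> ex_series (fun n => g n z)) ->
  is_derive (fun z => Series (fun n => g n z)) x (Series (fun n => d n x)).
Proof.
  intros Hx Hd HdM HM Hg.
  apply is_derive_Reals. intros eps He.
  destruct (tail_small M (eps/4)) as [N HN]; [exact HM|lra|].
  assert (HP : is_derive (fun z => sum_n (fun n => g n z) N) x (sum_n (fun n => d n x) N)).
  { apply (@is_derive_sum_n R_AbsRing R_NormedModule). intros k _. apply Hd, Hx. }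
  apply is_derive_Reals in HP.
  destruct (HP (eps/2)) as [d1 Hd1]; [lra|].
  assert (Hdel : 0 < Rmin d1 (Rmin (x - lo) (hi - x))).
  { destruct d1 as [d1 Hd1p]; simpl. repeat apply Rmin_pos; lra. }
  exists (mkposreal _ Hdel). intros h Hh0 Hhlt. simpl in Hhlt.
  assert (Hh1 : Rabs h < d1) by (eapply Rlt_le_trans; [exact Hhlt|apply Rmin_l]).
  assert (Hh2 : Rabs h < Rmin (x - lo) (hi - x)) by (eapply Rlt_le_trans; [exact Hhlt|apply Rmin_r]).
  assert (Hz : lo < x + h < hi).
  { apply Rabs_def2 in Hh2. destruct Hh2. split.
    - assert (Rmin (x - lo) (hi - x) <= x - lo) by apply Rmin_l. lra.
    - assert (Rmin (x - lo) (hi - x) <= hi - x) by apply Rmin_r. lra. }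
  set (z := x + h) in *.
  specialize (Hd1 h Hh0 Hh1).
  assert (M0 : forall n, 0 <= M n).
  { intros n. eapply Rle_trans; [apply Rabs_pos|apply (HdM n x Hx)]. }
  assert (Edx : ex_series (fun n => d n x)) by (apply (ex_series_dom _ M); [intros; apply HdM, Hx|exact HM]).
  pose proof (Hg z Hz) as Egz. pose proof (Hg x Hx) as Egx.
  rewrite (Series_incr_n _ (S N)) by (lia || assumption).
  rewrite (Series_incr_n (fun n => g n x) (S N)) by (lia || assumption).
  rewrite (Series_incr_n (fun n => d n x) (S N)) by (lia || assumption).
  simpl pred. rewrite <- !sum_n_Reals.
  set (Pz := sum_n (fun n => g n z) N) in *.
  set (Px := sum_n (fun n => g n x) N) in *.
  set (PD := sum_n (fun n => d n x) N) in *.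
  assert (Tail : Rabs (Series (fun k => g (S N + k)%nat z)
                   - Series (fun k => g (S N + k)%nat x)
                   - h * Series (fun k => d (S N + k)%nat x))
                 <= 2 * Rabs h * Series (fun k => M (S N + k)%nat)).
  { assert (E1 := proj1 (ex_series_incr_n _ (S N)) Egz).
    assert (E2 := proj1 (ex_series_incr_n _ (S N)) Egx).
    assert (E3 := proj1 (ex_series_incr_n _ (S N)) Edx).
    assert (E4 := proj1 (ex_series_incr_n _ (S N)) HM).
    rewrite <- Series_scal_l, <- Series_minus, <- Series_minus; try assumption;
    try (apply (ex_series_scal_l h _ E3)); try (apply (ex_series_minus _ _ E1 E2)).
    assert (Bd : forall k, Rabs (g (S N + k)%nat z - g (S N + k)%nat x - h * d (S N + k)%nat x)
                   <= 2 * Rabs h * M (S N + k)%nat).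
    { intros k.
      pose proof (mvt_bound (g (S N + k)%nat) (d (S N + k)%nat) lo hi (M (S N + k)%nat) x z
                   (Hd _) (HdM _) Hx Hz) as Hm.
      replace (z - x) with h in Hm by (unfold z; ring).
      pose proof (HdM (S N + k)%nat x Hx) as Hm2.
      eapply Rle_trans; [apply Rabs_triang|].
      rewrite Rabs_Ropp, Rabs_mult.
      assert (Rabs h * Rabs (d (S N + k)%nat x) <= Rabs h * M (S N + k)%nat)
        by (apply Rmult_le_compat_l; [apply Rabs_pos|exact Hm2]).
      lra. }
    eapply Rle_trans; [apply Series_Rabs|].
    - apply (ex_series_dom _ (fun k => 2 * Rabs h * M (S N + k)%nat)).
      + intros k. rewrite Rabs_Rabsolu. apply Bd.
      + exact (@ex_series_scal_l R_AbsRing R_NormedModule (2 * Rabs h) _ E4).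
    - rewrite <- Series_scal_l. apply Series_le.
      + intros k. split; [apply Rabs_pos|apply Bd].
      + exact (@ex_series_scal_l R_AbsRing R_NormedModule (2 * Rabs h) _ E4). }
  set (Tz := Series (fun k => g (S N + k)%nat z)) in *.
  set (Tx := Series (fun k => g (S N + k)%nat x)) in *.
  set (TD := Series (fun k => d (S N + k)%nat x)) in *.
  set (TM := Series (fun k => M (S N + k)%nat)) in *.
  assert (Hq : (Pz + Tz - (Px + Tx)) / h - (PD + TD)
               = ((Pz - Px) / h - PD) + (Tz - Tx - h * TD) / h) by (field; exact Hh0).
  rewrite Hq.
  eapply Rle_lt_trans; [apply Rabs_triang|].
  assert (Habs : 0 < Rabs h) by (apply Rabs_pos_lt; exact Hh0).
  assert (Ht2 : Rabs ((Tz - Tx - h * TD) / h) <= 2 * TM).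
  { unfold Rdiv. rewrite Rabs_mult, Rabs_inv.
    apply (Rmult_le_reg_r (Rabs h)); [exact Habs|].
    rewrite Rmult_assoc, Rinv_l by lra. lra. }
  assert (TM < eps / 4) by (apply Rabs_def2 in HN; lra).
  change (sum_n (fun n => g n (x + h)) N) with Pz in Hd1. lra.
Qed.

Definition AA (k l : Z) : R := 2 * IZR k + IZR l + 1.
Definition BB (l : Z) : R := IZR l + 1/2.
Definition phi1 (k l : Z) (y : R) : R :=
  - (AA k l ^ 2 - BB l) / (4 * y ^ 2) + BB l ^ 2 - 3 / (64 * y ^ 4).
Definition phi2 (k l : Z) (y : R) : R :=
  (AA k l ^ 2 - BB l) / (2 * y ^ 3) + 3 / (16 * y ^ 5).

Lemma phi_d1 k l y : 0 < y -> is_derive (phi k l) y (phi1 k l y).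
Proof.
  intros Hy. unfold phi, phi1, AA, BB. auto_derive.
  - repeat split; try (apply Rgt_not_eq || apply Rlt_not_eq); nra.
  - field. lra.
Qed.

Ltac nz := repeat split; try (apply Rgt_not_eq; repeat apply Rmult_lt_0_compat; lra).

Lemma phi_d2 k l y : 0 < y -> is_derive (phi1 k l) y (phi2 k l y).
Proof.
  intros Hy. unfold phi2, phi1, AA, BB. auto_derive.
  - nz.
  - field. lra.
Qed.

Lemma is_derive_eq (f : R -> R) x l1 l2 : is_derive f x l1 -> l1 = l2 -> is_derive f x l2.
Proof. intros H ->; exact H. Qed.

Definition g0 (c : R) (k l : Z) (y : R) : R := exp (c * phi k l y).
Definition g1 (c : R) (k l : Z) (y : R) : R := c * phi1 k l y * exp (c * phi k l y).
Definition g2 (c : R) (k l : Z) (y : R) : R :=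
  (c * phi2 k l y + (c * phi1 k l y) ^ 2) * exp (c * phi k l y).

Lemma g_d1 c k l y : 0 < y -> is_derive (g0 c k l) y (g1 c k l y).
Proof.
  intros Hy. unfold g0, g1.
  pose proof (is_derive_comp exp (fun y => c * phi k l y) y _ _
     (is_derive_exp (c * phi k l y)) (is_derive_scal _ _ c _ (phi_d1 k l y Hy))) as H.
  simpl in H. exact H.
Qed.

Lemma g_d2 c k l y : 0 < y -> is_derive (g1 c k l) y (g2 c k l y).
Proof.
  intros Hy. unfold g1, g2.
  pose proof (is_derive_comp exp (fun y => c * phi k l y) y _ _
     (is_derive_exp (c * phi k l y)) (is_derive_scal _ _ c _ (phi_d1 k l y Hy))) as H.
  pose proof (is_derive_mult (fun y => c * phi1 k l y) (fun y => exp (c * phi k l y)) y _ _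
     (is_derive_scal _ _ c _ (phi_d2 k l y Hy)) H Rmult_comm) as H2.
  eapply is_derive_eq; [exact H2|].
  unfold plus, mult, scal; simpl; unfold mult; simpl. ring.
Qed.

Lemma rbounds y : 17/20 <= y <= 101/100 -> 100/101 <= /y <= 20/17 /\ y * /y = 1.
Proof.
  intros Hy. split; [split|].
  - replace (100/101) with (/ (101/100)) by field. apply Rinv_le_contravar; lra.
  - replace (20/17) with (/ (17/20)) by field. apply Rinv_le_contravar; lra.
  - field. lra.
Qed.

Lemma h1_bound r : 100/101 <= r <= 20/17 -> Rabs (- r^2/8 + 1/4 - 3 * r^4/64) <= 1/10.
Proof.
  intros Hr. assert (r^2 >= (100/101)^2) by nra. assert (r^2 <= (20/17)^2) by nra.
  assert (r^4 = r^2*r^2) by ring.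
  assert (r^4 >= (100/101)^4) by nra. assert (r^4 <= (20/17)^4) by nra.
  apply Rabs_le. lra.
Qed.

Lemma h2_bound r : 100/101 <= r <= 20/17 -> 0 <= r^3/4 + 3 * r^5/16 <= 85/100.
Proof.
  intros Hr. assert (r^3 <= (20/17)^3) by (apply pow_incr; lra).
  assert (r^5 <= (20/17)^5) by (apply pow_incr; lra).
  assert (0 <= r^3) by (apply pow_le; lra). assert (0 <= r^5) by (apply pow_le; lra). lra.
Qed.

Lemma abs_le_elim x b : Rabs x <= b -> -b <= x <= b.
Proof. unfold Rabs; destruct (Rcase_abs x); lra. Qed.

Lemma ww_lower P Q y r : 17/20 <= y <= 101/100 -> 100/101 <= r <= 20/17 -> 0 <= Q ->
  0 <= 100 * P + 289 * Q -> (100 * P + 289 * Q) / 404 <= P * r / 4 + Q * y.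
Proof.
  intros Hy Hr HQ HPQ.
  destruct (Rle_or_lt 0 P) as [HP|HP].
  - assert (P * r >= P * (100/101)) by nra. assert (Q * y >= Q * (17/20)) by nra. lra.
  - assert (P * r >= P * (20/17)) by nra. assert (Q * y >= Q * (17/20)) by nra. lra.
Qed.

Lemma phi1_bound P Q y r w h1 : 17/20 <= y <= 101/100 -> 100/101 <= r <= 20/17 -> 0 <= Q ->
  (P < 0 -> 2 <= Q /\ - P <= Q) -> w = P * r / 4 + Q * y -> 85/100 <= w -> Rabs h1 <= 1/10 ->
  Rabs (h1 - P * r^2 / 4 + Q) <= 3 * w.
Proof.
  intros Hy Hr HQ HPn Hw Hw1 Hh. apply abs_le_elim in Hh. apply Rabs_le.
  destruct (Rle_or_lt 0 P) as [HP|HP].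
  - assert (Q * y >= Q * (17/20)) by nra. assert (P * r >= 0) by nra.
    assert (P * r^2 = (P * r) * r) by ring. assert (P * r * r <= P * r * (20/17)) by nra.
    assert (P * r * r >= 0) by nra.
    split; lra.
  - destruct (HPn HP) as [HQ2 HPQ].
    assert (Q * y >= Q * (17/20)) by nra.
    assert (P * r >= - Q * (20/17)) by nra.
    assert (P * r^2 >= - Q * (20/17)^2) by nra.
    assert (P * r^2 <= 0) by nra.
    split; lra.
Qed.

Lemma phi2_bound P Q y r w h2 : 17/20 <= y <= 101/100 -> 100/101 <= r <= 20/17 -> 0 <= Q ->
  (P < 0 -> 2 <= Q /\ - P <= Q) -> w = P * r / 4 + Q * y -> 85/100 <= w -> 0 <= h2 <= 85/100 ->
  Rabs (h2 + P * r^3 / 2) <= 4 * w.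
Proof.
  intros Hy Hr HQ HPn Hw Hw1 Hh. apply Rabs_le.
  assert (Hr3 : r^3 = r * r^2) by ring.
  assert (0 < r^2) by nra. assert (r^2 <= (20/17)^2) by nra.
  destruct (Rle_or_lt 0 P) as [HP|HP].
  - assert (Q * y >= 0) by nra. assert (P * r >= 0) by nra.
    assert (P * r^3 = (P * r) * r^2) by ring. assert (P * r * r^2 <= P * r * (20/17)^2) by nra.
    assert (0 <= P * r * r^2) by nra.
    split; lra.
  - destruct (HPn HP) as [HQ2 HPQ].
    assert (Q * y >= Q * (17/20)) by nra.
    assert (P * r >= - Q * (20/17)) by nra.
    assert (P * r^3 = (P * r) * r^2) by ring.
    assert (P * r * r^2 >= - Q * (20/17) * (20/17)^2) by nra.
    assert (P * r <= 0) by nra. assert (P * r * r^2 <= 0) by nra.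
    split; lra.
Qed.

Lemma PI_ge : 3.14 <= PI.
Proof.
  destruct (PI_2_3_7_ineq 1) as [H _].
  simpl in H. unfold tg_alt, PI_2_3_7_tg, Ratan_seq in H. simpl in H. lra.
Qed.

Lemma exp_INR_mult n x : exp (INR n * x) = exp x ^ n.
Proof.
  induction n as [|n IH].
  - simpl. rewrite Rmult_0_l, exp_0. reflexivity.
  - rewrite S_INR, Rmult_plus_distr_r, Rmult_1_l, exp_plus, IH. simpl. ring.
Qed.

Lemma exp_ge8 x : 0 <= x -> (1 + x/8)^8 <= exp x.
Proof.
  intros Hx. replace x with (INR 8 * (x/8)) at 2 by (simpl; field).
  rewrite exp_INR_mult. apply pow_incr. split; [lra|]. apply exp_ineq1_le.
Qed.

Lemma sq_le_exp x : 0 <= x -> x^2 <= 64 * exp (x/4).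
Proof.
  intros Hx. replace (x/4) with (x/8 + x/8) by field. rewrite exp_plus.
  pose proof (exp_ineq1_le (x/8)). nra.
Qed.

Definition rho := exp (- (3/10 * PI)).
Definition EE := exp (- (255/100 * PI)).

Lemma rho_bound : 0 < rho <= 42/100.
Proof.
  unfold rho. split; [apply exp_pos|]. pose proof PI_ge as Hpi.
  pose proof (exp_ge8 (3/10*PI)) as H. rewrite exp_Ropp.
  assert (Hb : (1 + 942/8000)^8 <= (1 + (3/10*PI)/8)^8) by (apply pow_incr; lra).
  assert (0 < exp (3/10*PI)) by apply exp_pos.
  apply (Rmult_le_reg_r (exp (3/10*PI))); [lra|]. rewrite Rinv_l by lra.
  assert (1 <= 42/100 * (1 + 942/8000)^8) by (simpl; lra). nra.
Qed.

Lemma EE_bound : 0 < EE <= 1/256.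
Proof.
  unfold EE. split; [apply exp_pos|]. pose proof PI_ge as Hpi.
  pose proof (exp_ge8 (255/100*PI)) as H. rewrite exp_Ropp.
  assert (Hb : (1 + 1)^8 <= (1 + (255/100*PI)/8)^8) by (apply pow_incr; lra).
  assert (0 < exp (255/100*PI)) by apply exp_pos.
  apply (Rmult_le_reg_r (exp (255/100*PI))); [lra|]. rewrite Rinv_l by lra.
  simpl in Hb. lra.
Qed.

Lemma rho_pow_exp n m : exp (- (255/100 * PI + 3/10 * PI * (INR n + INR m))) = EE * rho ^ n * rho ^ m.
Proof.
  unfold EE, rho. rewrite <- !exp_INR_mult, <- !exp_plus. f_equal. ring.
Qed.

Lemma exp_mono x y : x <= y -> exp x <= exp y.
Proof. intros H. destruct (Rle_lt_or_eq_dec _ _ H) as [H'|H']; [apply Rlt_le, exp_increasing, H'|subst; lra]. Qed.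

Lemma nm_bound a w p1 p2 X : 6 * PI <= a -> 85/100 <= w -> Rabs p1 <= 3 * w -> Rabs p2 <= 4 * w ->
  X <= 9/2 * PI * w ->
  exp (- (a * w)) <= 640 * exp (- X) /\
  exp (- (a * w)) * Rabs (- a * p1) <= 640 * exp (- X) /\
  exp (- (a * w)) * Rabs (- a * p2 + (- a * p1) ^ 2) <= 640 * exp (- X).
Proof.
  intros Ha Hw H1 H2 HX. pose proof PI_ge as Hpi.
  set (x := a * w).
  assert (Hx : 16 <= x) by (unfold x; nra).
  assert (Ha0 : 0 < a) by lra.
  assert (Hq : x^2 <= 64 * exp (x/4)) by (apply sq_le_exp; lra).
  assert (Hxx : exp (-x) * exp (x/4) <= exp (- X)).
  { rewrite <- exp_plus. apply exp_mono. unfold x. nra. }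
  assert (Hex : 0 < exp (-x)) by apply exp_pos.
  assert (He : exp (- x) * (10 * x^2) <= 640 * exp (- X)) by nra.
  assert (A1 : Rabs (- a * p1) <= 3 * x).
  { rewrite Rabs_mult, Rabs_Ropp, (Rabs_right a) by lra. unfold x. nra. }
  assert (A2 : Rabs (- a * p2 + (- a * p1) ^ 2) <= 4 * x + 9 * x^2).
  { eapply Rle_trans; [apply Rabs_triang|].
    rewrite <- RPow_abs.
    assert (Rabs (- a * p1) ^ 2 <= (3*x)^2).
    { apply pow_incr. split; [apply Rabs_pos|exact A1]. }
    assert (Rabs (- a * p2) <= 4 * x).
    { rewrite Rabs_mult, Rabs_Ropp, (Rabs_right a) by lra. unfold x. nra. }
    nra. }
  assert (B0 : exp (-x) * 1 <= exp (-x) * (10 * x^2)) by (apply Rmult_le_compat_l; nra).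
  assert (B1 : exp (-x) * Rabs (- a * p1) <= exp (-x) * (10 * x^2)) by (apply Rmult_le_compat_l; nra).
  assert (B2 : exp (-x) * Rabs (- a * p2 + (- a * p1) ^ 2) <= exp (-x) * (10 * x^2)) by (apply Rmult_le_compat_l; nra).
  split; [|split]; lra.
Qed.

Lemma piece (y r s yl yh : R) : 0 < yl -> yl <= y <= yh -> r * y = 1 -> 0 <= s <= 17321/10000 ->
  (2 * y + s) * (4 * y^2 + 1) * r^4 / 32 <= (2 * yh + 17321/10000) * (4 * yh^2 + 1) * (/yl)^4 / 32
  /\ (/yh)^3/4 + 3 * (/yh)^5/16 <= r^3/4 + 3 * r^5/16.
Proof.
  intros Hyl Hy Hr Hs.
  assert (Hy0 : 0 < y) by lra.
  assert (Hr' : r = / y) by (field_simplify_eq; [lra|lra]).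
  assert (Hr1 : r <= / yl) by (rewrite Hr'; apply Rinv_le_contravar; lra).
  assert (Hr2 : / yh <= r) by (rewrite Hr'; apply Rinv_le_contravar; lra).
  assert (Hr0 : 0 < r) by (rewrite Hr'; apply Rinv_0_lt_compat; lra).
  assert (0 < / yh) by (apply Rinv_0_lt_compat; lra).
  split.
  - assert (A : 0 <= (2 * y + s) * (4 * y^2 + 1) <= (2 * yh + 17321/10000) * (4 * yh^2 + 1)).
    { split; [nra|]. apply Rmult_le_compat; nra. }
    assert (B : 0 <= r^4 <= (/yl)^4) by (split; [apply pow_le; lra|apply pow_incr; lra]).
    apply Rmult_le_compat_r; [lra|]. apply Rmult_le_compat; lra.
  - assert ((/yh)^3 <= r^3) by (apply pow_incr; lra).
    assert ((/yh)^5 <= r^5) by (apply pow_incr; lra). lra.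
Qed.

Lemma main_ineq (y s t al : R) : s * s = 3 -> 1732/1000 <= s <= 17321/10000 ->
  t = y - s/2 -> 0 <= t -> y <= 10022/10000 -> 9 * al * t^2 <= 1 -> 0 < al ->
  - (PI * al) * (1/(4*y^3) + 3/(16*y^5)) + (- (PI * al) * (-1/(8*y^2) + 1/4 - 3/(64*y^4)))^2 <= - (15/100) * (PI * al).
Proof.
  intros Hs Hsb Ht Ht0 Hyh H9 Hal. set (a := PI * al).
  assert (Hy0 : 0 < y) by lra.
  set (r := / y).
  assert (Hr : r * y = 1) by (unfold r; field; lra).
  assert (E1 : -1/(8*y^2) + 1/4 - 3/(64*y^4) = t * ((2 * y + s) * (4 * y^2 + 1) * r^4 / 32)).
  { rewrite Ht. unfold r. field_simplify_eq; [|lra]. replace (s^2) with 3 by (rewrite <- Hs; ring). ring. }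
  assert (E2 : 1/(4*y^3) + 3/(16*y^5) = r^3/4 + 3 * r^5/16) by (unfold r; field; lra).
  rewrite E1, E2.
  set (Pf := (2 * y + s) * (4 * y^2 + 1) * r^4 / 32).
  set (H2 := r^3/4 + 3 * r^5/16).
  assert (KEY : 4/9 * Pf^2 <= H2 - 15/100).
  { destruct (Rle_or_lt y (935/1000)) as [Hy1|Hy1].
    - destruct (piece y r s (866/1000) (935/1000)) as [P1 P2]; try lra.
      fold Pf H2 in P1, P2.
      assert (0 <= Pf) by (unfold Pf; apply Rmult_le_pos; [|lra]; apply Rmult_le_pos; [|apply pow_le; unfold r; apply Rlt_le, Rinv_0_lt_compat; lra]; nra).
      assert (Pf^2 <= ((2 * (935/1000) + 17321/10000) * (4 * (935/1000)^2 + 1) * (/(866/1000))^4 / 32)^2)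
        by (apply pow_incr; lra).
      fold Pf H2 in P1, P2.
      replace (/ (866/1000)) with (1000/866) in * by field.
      replace (/ (935/1000)) with (1000/935) in * by field. lra.
    - destruct (piece y r s (935/1000) (10022/10000)) as [P1 P2]; try lra.
      fold Pf H2 in P1, P2.
      assert (0 <= Pf) by (unfold Pf; apply Rmult_le_pos; [|lra]; apply Rmult_le_pos; [|apply pow_le; unfold r; apply Rlt_le, Rinv_0_lt_compat; lra]; nra).
      assert (Pf^2 <= ((2 * (10022/10000) + 17321/10000) * (4 * (10022/10000)^2 + 1) * (/(935/1000))^4 / 32)^2)
        by (apply pow_incr; lra).
      fold Pf H2 in P1, P2.
      replace (/ (10022/10000)) with (10000/10022) in * by field.
      replace (/ (935/1000)) with (1000/935) in * by field. lra. }
  assert (Hpi : PI <= 4) by apply PI_4.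
  assert (Ha : 0 < a) by (unfold a; pose proof PI_RGT_0; nra).
  assert (Q : a * t^2 <= 4/9) by (unfold a; pose proof PI_RGT_0; nra).
  assert (Q2 : a * t^2 * Pf^2 <= 4/9 * Pf^2) by (apply Rmult_le_compat_r; [apply pow2_ge_0|exact Q]).
  replace ((- a * (t * Pf))^2) with (a * (a * t^2 * Pf^2)) by ring.
  assert (a * (a * t^2 * Pf^2) <= a * (H2 - 15/100)) by (apply Rmult_le_compat_l; lra).
  lra.
Qed.

Local Open Scope Z_scope.
Definition nonmain (k l : Z) : Prop := ~ ((k = 0 /\ l = 0) \/ (k = -1 /\ l = 0) \/ (k = 0 /\ l = -1)).
Lemma I0 l : 0 <= l * (l + 1). Proof. nia. Qed.
Lemma I3 k l : (2*k+l+1)^2 - l - 1 < 0 -> 2 <= l*(l+1) /\ -((2*k+l+1)^2 - l - 1) <= l*(l+1).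
Proof. intros H. nia. Qed.
Lemma I2 k l : nonmain k l -> 350 <= 100 * ((2*k+l+1)^2 - l - 1) + 289 * (l*(l+1)).
Proof. unfold nonmain. intros H. nia. Qed.
Lemma I1 k l : nonmain k l -> 162 * (Z.abs k + Z.abs l) <= 100 * ((2*k+l+1)^2 - l - 1) + 289 * (l*(l+1)).
Proof. unfold nonmain. intros H. nia. Qed.

Lemma z_enum_spec n : (Z.of_nat n <= 2 * Z.abs (z_enum n)) /\ (z_enum n = 0 -> n = 0%nat) /\ (z_enum n = -1 -> n = 1%nat).
Proof.
  unfold z_enum. pose proof (Nat.div2_odd n) as Hd. pose proof (Nat.div2_odd (S n)) as Hd2.
  rewrite Nat.odd_succ in Hd2. rewrite <- Nat.negb_odd.
  remember (Nat.div2 n) as d1. remember (Nat.div2 (S n)) as d2.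
  rewrite <- Nat.negb_odd in Hd2.
  destruct (Nat.odd n) eqn:E; cbn [negb Nat.b2n] in *; lia.
Qed.

Local Close Scope Z_scope.

Definition hh (y : R) : R := 1/(8*y) + y/4 + 1/(64*y^3).
Definition h1 (y : R) : R := -1/(8*y^2) + 1/4 - 3/(64*y^4).
Definition h2 (y : R) : R := 1/(4*y^3) + 3/(16*y^5).
Definition pZ (k l : Z) : Z := ((2*k+l+1)^2 - l - 1)%Z.
Definition qZ (l : Z) : Z := (l*(l+1))%Z.
Definition ww (k l : Z) (y : R) : R := IZR (pZ k l) * / y / 4 + IZR (qZ l) * y.

Lemma IZR_p k l : IZR (pZ k l) = (2 * IZR k + IZR l + 1)^2 - IZR l - 1.
Proof. unfold pZ. rewrite Z.pow_2_r, !minus_IZR, !mult_IZR, !plus_IZR, !mult_IZR. simpl. ring. Qed.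
Lemma IZR_q l : IZR (qZ l) = IZR l * (IZR l + 1).
Proof. unfold qZ. rewrite mult_IZR, plus_IZR. reflexivity. Qed.

Lemma decomp k l y : 0 < y ->
  phi k l y = hh y + ww k l y /\
  phi1 k l y = h1 y - IZR (pZ k l) * (/y)^2 / 4 + IZR (qZ l) /\
  phi2 k l y = h2 y + IZR (pZ k l) * (/y)^3 / 2.
Proof.
  intros Hy. unfold phi, phi1, phi2, hh, h1, h2, ww, AA, BB. rewrite IZR_p, IZR_q.
  split; [|split]; field; lra.
Qed.

Lemma int_facts (n m : nat) : nonmain (z_enum n) (z_enum m) ->
  let P := IZR (pZ (z_enum n) (z_enum m)) in let Q := IZR (qZ (z_enum m)) in
  0 <= Q /\ (P < 0 -> 2 <= Q /\ - P <= Q) /\ 350 <= 100 * P + 289 * Q /\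
  81 * (INR n + INR m) <= 100 * P + 289 * Q.
Proof.
  intros Hnm P Q. set (k := z_enum n) in *. set (l := z_enum m) in *.
  split; [|split; [|split]].
  - apply IZR_le. apply I0.
  - intros HP. apply lt_IZR in HP. destruct (I3 k l HP) as [A B].
    split; [apply IZR_le in A; exact A|]. apply IZR_le in B. rewrite opp_IZR in B. exact B.
  - assert (H : (350 <= 100 * pZ k l + 289 * qZ l)%Z) by exact (I2 k l Hnm). apply IZR_le in H. rewrite plus_IZR, !mult_IZR in H. exact H.
  - pose proof (I1 k l Hnm) as H. destruct (z_enum_spec n) as [Hn _]. destruct (z_enum_spec m) as [Hm _].
    fold k in Hn. fold l in Hm.
    assert (H' : (81 * (Z.of_nat n + Z.of_nat m) <= 100 * pZ k l + 289 * qZ l)%Z) by (unfold pZ, qZ; lia).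
    apply IZR_le in H'. rewrite plus_IZR, !mult_IZR, plus_IZR, <- !INR_IZR_INZ in H'. exact H'.
Qed.

Lemma nonmain_bound (a c : R) (n m : nat) (z : R) : 6*PI <= a -> c = - a -> 17/20 <= z <= 101/100 ->
  nonmain (z_enum n) (z_enum m) ->
  Rabs (g0 c (z_enum n) (z_enum m) z) <= exp (- (a * hh z)) * (640 * (EE * rho^n * rho^m)) /\
  Rabs (g1 c (z_enum n) (z_enum m) z) <= exp (- (a * hh z)) * (640 * (EE * rho^n * rho^m)) /\
  Rabs (g2 c (z_enum n) (z_enum m) z) <= exp (- (a * hh z)) * (640 * (EE * rho^n * rho^m)).
Proof.
  intros Ha Hc Hz Hnm.
  destruct (int_facts n m Hnm) as [HQ [HPn [H350 H81]]].
  set (k := z_enum n) in *. set (l := z_enum m) in *.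
  assert (Hz0 : 0 < z) by lra.
  destruct (decomp k l z Hz0) as [D0 [D1 D2]].
  set (P := IZR (pZ k l)) in *. set (Q := IZR (qZ l)) in *.
  destruct (rbounds z Hz) as [Hr Hzr].
  set (r := / z) in *.
  set (w := ww k l z) in *.
  assert (Hw : w = P * r / 4 + Q * z) by (unfold w, ww; fold P Q r; ring).
  assert (Hwl : (100 * P + 289 * Q) / 404 <= P * r / 4 + Q * z) by (apply ww_lower; lra).
  assert (Hw85 : 85/100 <= w) by lra.
  assert (Hh1 : h1 z = - r^2/8 + 1/4 - 3 * r^4/64) by (unfold h1, r; field; lra).
  assert (Hh2 : h2 z = r^3/4 + 3 * r^5/16) by (unfold h2, r; field; lra).
  pose proof (h1_bound r Hr) as B1. rewrite <- Hh1 in B1.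
  pose proof (h2_bound r Hr) as B2. rewrite <- Hh2 in B2.
  assert (P1 : Rabs (phi1 k l z) <= 3 * w) by (rewrite D1; apply (phi1_bound P Q z r w (h1 z)); assumption || lra).
  assert (P2 : Rabs (phi2 k l z) <= 4 * w) by (rewrite D2; apply (phi2_bound P Q z r w (h2 z)); assumption || lra).
  pose proof PI_ge as Hpi.
  assert (HX : 255/100 * PI + 3/10 * PI * (INR n + INR m) <= 9/2 * PI * w).
  { assert (INR n + INR m <= 5 * w) by lra. nra. }
  destruct (nm_bound a w (phi1 k l z) (phi2 k l z) _ Ha Hw85 P1 P2 HX) as [N0 [N1 N2]].
  rewrite rho_pow_exp in N0, N1, N2.
  assert (Hexp : exp (c * phi k l z) = exp (- (a * hh z)) * exp (- (a * w))).
  { rewrite <- exp_plus, D0, Hc. f_equal. ring. }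
  assert (He1 : 0 < exp (- (a * hh z))) by apply exp_pos.
  assert (He2 : 0 < exp (- (a * w))) by apply exp_pos.
  unfold g0, g1, g2. rewrite Hexp, Hc.
  split; [|split].
  - rewrite Rabs_right by (apply Rle_ge, Rmult_le_pos; lra).
    apply Rmult_le_compat_l; lra.
  - replace (- a * phi1 k l z * (exp (- (a * hh z)) * exp (- (a * w))))
      with (exp (- (a * hh z)) * (exp (- (a * w)) * (- a * phi1 k l z))) by ring.
    rewrite Rabs_mult, (Rabs_right (exp _)) by lra.
    apply Rmult_le_compat_l; [lra|]. rewrite Rabs_mult, (Rabs_right (exp _)) by lra. exact N1.
  - replace ((- a * phi2 k l z + (- a * phi1 k l z) ^ 2) * (exp (- (a * hh z)) * exp (- (a * w))))
      with (exp (- (a * hh z)) * (exp (- (a * w)) * (- a * phi2 k l z + (- a * phi1 k l z) ^ 2))) by ring.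
    rewrite Rabs_mult, (Rabs_right (exp _)) by lra.
    apply Rmult_le_compat_l; [lra|]. rewrite Rabs_mult, (Rabs_right (exp _)) by lra. exact N2.
Qed.

Lemma main_pq k l : ~ nonmain k l -> pZ k l = 0%Z /\ qZ l = 0%Z.
Proof.
  unfold nonmain. intros H. apply NNPP in H.
  destruct H as [[-> ->]|[[-> ->]|[-> ->]]]; split; reflexivity.
Qed.

Lemma main_vals c k l z : ~ nonmain k l -> 0 < z ->
  g0 c k l z = exp (c * hh z) /\ g1 c k l z = c * h1 z * exp (c * hh z) /\
  g2 c k l z = (c * h2 z + (c * h1 z)^2) * exp (c * hh z).
Proof.
  intros Hm Hz. destruct (main_pq k l Hm) as [Hp Hq].
  destruct (decomp k l z Hz) as [D0 [D1 D2]].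
  unfold ww in D0. rewrite Hp, Hq in D0, D1. rewrite Hp in D2. change (IZR 0) with 0 in D0, D1, D2.
  assert (E0 : phi k l z = hh z). { rewrite D0. rewrite !Rmult_0_l, Rdiv_0_l, Rplus_0_l, Rplus_0_r. reflexivity. }
  assert (E1 : phi1 k l z = h1 z) by (rewrite D1; lra).
  assert (E2 : phi2 k l z = h2 z) by (rewrite D2; lra).
  unfold g0, g1, g2. rewrite E0, E1, E2. split; [|split]; reflexivity.
Qed.

Lemma hh_pos z : 0 < z -> 0 < hh z.
Proof.
  intros Hz. unfold hh. assert (0 < z^3) by (apply pow_lt; lra).
  assert (0 < 1/(8*z)) by (apply Rdiv_lt_0_compat; lra).
  assert (0 < 1/(64*z^3)) by (apply Rdiv_lt_0_compat; lra). lra.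
Qed.

Lemma main_bound a c k l z : 0 <= a -> c = - a -> 17/20 <= z <= 101/100 -> ~ nonmain k l ->
  Rabs (g0 c k l z) <= 1 + a + a^2 /\ Rabs (g1 c k l z) <= 1 + a + a^2 /\
  Rabs (g2 c k l z) <= 1 + a + a^2.
Proof.
  intros Ha Hc Hz Hm. assert (Hz0 : 0 < z) by lra.
  destruct (main_vals c k l z Hm Hz0) as [E0 [E1 E2]]. rewrite E0, E1, E2.
  destruct (rbounds z Hz) as [Hr Hzr].
  assert (Hh1 : h1 z = - (/z)^2/8 + 1/4 - 3 * (/z)^4/64) by (unfold h1; field; lra).
  assert (Hh2 : h2 z = (/z)^3/4 + 3 * (/z)^5/16) by (unfold h2; field; lra).
  pose proof (h1_bound _ Hr) as B1. rewrite <- Hh1 in B1. apply abs_le_elim in B1.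
  pose proof (h2_bound _ Hr) as B2. rewrite <- Hh2 in B2.
  assert (He : 0 < exp (c * hh z) <= 1).
  { split; [apply exp_pos|]. rewrite <- exp_0. apply exp_mono. rewrite Hc.
    pose proof (hh_pos z Hz0). nra. }
  subst c. split; [|split].
  - rewrite Rabs_right by lra. nra.
  - rewrite Rabs_mult, (Rabs_right (exp _)) by lra.
    assert (Rabs (- a * h1 z) <= a) by (apply Rabs_le; nra).
    assert (0 <= Rabs (- a * h1 z)) by apply Rabs_pos. nra.
  - rewrite Rabs_mult, (Rabs_right (exp _)) by lra.
    assert (0 <= (- a * h1 z)^2 <= a^2).
    { split; [apply pow2_ge_0|]. replace ((- a * h1 z)^2) with (a^2 * (h1 z)^2) by ring.
      assert (h1 z ^2 <= 1) by nra. assert (0 <= a^2) by nra. nra. }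
    assert (0 <= a * h2 z <= a) by (split; nra).
    assert (Rabs (- a * h2 z + (- a * h1 z)^2) <= a + a^2) by (apply Rabs_le; split; lra).
    assert (0 <= Rabs (- a * h2 z + (- a * h1 z)^2)) by apply Rabs_pos. nra.
Qed.

Definition KK (a : R) : R := 640 * EE + (1 + a + a^2) / rho.

Lemma maj_bound a c n m z : 6 * PI <= a -> c = - a -> 17/20 <= z <= 101/100 ->
  Rabs (g0 c (z_enum n) (z_enum m) z) <= KK a * rho^n * rho^m /\
  Rabs (g1 c (z_enum n) (z_enum m) z) <= KK a * rho^n * rho^m /\
  Rabs (g2 c (z_enum n) (z_enum m) z) <= KK a * rho^n * rho^m.
Proof.
  intros Ha Hc Hz. pose proof PI_ge. pose proof rho_bound as [Hr0 Hr1]. pose proof EE_bound as [He0 He1].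
  assert (Hrn : 0 < rho^n) by (apply pow_lt; lra).
  assert (Hrm : 0 < rho^m) by (apply pow_lt; lra).
  assert (Ha0 : 0 < a) by lra.
  assert (Hq : 0 <= (1 + a + a^2) / rho) by (apply Rlt_le, Rdiv_lt_0_compat; nra).
  destruct (classic (nonmain (z_enum n) (z_enum m))) as [Hnm|Hm].
  - destruct (nonmain_bound a c n m z Ha Hc Hz Hnm) as [A [B C]].
    assert (Hx : exp (- (a * hh z)) <= 1).
    { rewrite <- exp_0. apply exp_mono. pose proof (hh_pos z ltac:(lra)). nra. }
    assert (Hx0 : 0 < exp (- (a * hh z))) by apply exp_pos.
    assert (exp (- (a * hh z)) * (640 * (EE * rho ^ n * rho ^ m)) <= KK a * rho^n * rho^m).
    { unfold KK. assert (0 < rho^n * rho^m) by nra.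
      assert (0 <= (1 + a + a ^ 2) / rho * (rho^n * rho^m)) by nra.
      assert (exp (- (a * hh z)) * (640 * (EE * rho ^ n * rho ^ m)) <= 640 * EE * (rho^n * rho^m)).
      { replace (640 * (EE * rho ^ n * rho ^ m)) with (640 * EE * (rho^n * rho^m)) by ring.
        assert (0 < 640 * EE * (rho^n * rho^m)) by nra. nra. }
      nra. }
    split; [|split]; lra.
  - destruct (main_bound a c _ _ z ltac:(lra) Hc Hz Hm) as [A [B C]].
    assert (Hnm : rho <= rho^n * rho^m).
    { unfold nonmain in Hm. apply NNPP in Hm.
      destruct (z_enum_spec n) as [_ [Hn0 Hn1]]. destruct (z_enum_spec m) as [_ [Hm0 Hm1]].
      destruct Hm as [[X Y]|[[X Y]|[X Y]]].
      + rewrite (Hn0 X), (Hm0 Y). simpl. lra.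
      + rewrite (Hn1 X), (Hm0 Y). simpl. lra.
      + rewrite (Hn0 X), (Hm1 Y). simpl. lra. }
    assert (1 + a + a^2 <= KK a * rho^n * rho^m).
    { unfold KK. rewrite Rmult_assoc.
      assert ((1 + a + a^2) / rho * rho <= (1 + a + a^2) / rho * (rho^n * rho^m)) by (apply Rmult_le_compat_l; lra).
      replace ((1 + a + a^2) / rho * rho) with (1 + a + a^2) in * by (field; lra).
      assert (0 <= 640 * EE * (rho^n * rho^m)) by nra. nra. }
    split; [|split]; lra.
Qed.

Lemma abs_series_le (u v : nat -> R) : (forall n, Rabs (u n) <= v n) -> ex_series v ->
  Rabs (Series u) <= Series v.
Proof.
  intros H Hv. eapply Rle_trans; [apply Series_Rabs|].
  - apply (ex_series_dom _ v); [intros n; rewrite Rabs_Rabsolu; apply H|exact Hv].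
  - apply Series_le; [intros n; split; [apply Rabs_pos|apply H]|exact Hv].
Qed.

Lemma geom_is (K q : R) : 0 <= q < 1 -> is_series (fun m => K * q^m) (K / (1 - q)).
Proof.
  intros Hq. unfold Rdiv. apply (is_series_scal_l K (fun m => q^m)). apply is_series_geom.
  rewrite Rabs_right; lra.
Qed.

Lemma geom_ex (K q : R) : 0 <= q < 1 -> ex_series (fun m => K * q^m).
Proof. intros Hq. eexists. apply geom_is, Hq. Qed.

Lemma geom_S (K q : R) : 0 <= q < 1 -> Series (fun m => K * q^m) = K / (1 - q).
Proof. intros Hq. apply is_series_unique, geom_is, Hq. Qed.

Lemma double_C2 (G0 G1 G2 : nat -> nat -> R -> R) (K q lo hi : R) :
  0 <= q < 1 ->
  (forall n m z, lo < z < hi -> is_derive (G0 n m) z (G1 n m z)) ->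
  (forall n m z, lo < z < hi -> is_derive (G1 n m) z (G2 n m z)) ->
  (forall n m z, lo < z < hi -> Rabs (G0 n m z) <= K * q^n * q^m /\
      Rabs (G1 n m z) <= K * q^n * q^m /\ Rabs (G2 n m z) <= K * q^n * q^m) ->
  forall z, lo < z < hi ->
  is_derive (fun z => Series (fun n => Series (fun m => G0 n m z))) z
            (Series (fun n => Series (fun m => G1 n m z))) /\
  is_derive (fun z => Series (fun n => Series (fun m => G1 n m z))) z
            (Series (fun n => Series (fun m => G2 n m z))).
Proof.
  intros Hq D1 D2 B z Hz.
  assert (Ein : forall n, ex_series (fun m => K * q^n * q^m)) by (intros n; apply geom_ex, Hq).
  assert (Sin : forall n, Series (fun m => K * q^n * q^m) = K * q^n / (1 - q)) by (intros n; apply geom_S, Hq).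
  assert (Eout : ex_series (fun n => K * q^n / (1 - q))).
  { apply (ex_series_ext (fun n => K / (1 - q) * q^n) (fun n => K * q^n / (1 - q))).
    - intros n. change (K / (1 - q) * q ^ n = K * q ^ n / (1 - q) :> R). field. lra.
    - apply geom_ex, Hq. }
  assert (Binner : forall (G : nat -> nat -> R -> R) n t, lo < t < hi ->
            (forall m, Rabs (G n m t) <= K * q^n * q^m) ->
            ex_series (fun m => G n m t) /\ Rabs (Series (fun m => G n m t)) <= K * q^n / (1 - q)).
  { intros G n t Ht HG. split.
    - apply (ex_series_dom _ _ HG (Ein n)).
    - rewrite <- Sin. apply abs_series_le; [exact HG|apply Ein]. }
  assert (I01 : forall n t, lo < t < hi ->
     is_derive (fun z => Series (fun m => G0 n m z)) t (Series (fun m => G1 n m t))).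
  { intros n t Ht. apply (series_derive (fun m z => G0 n m z) (fun m z => G1 n m z) (fun m => K * q^n * q^m) lo hi t Ht).
    - intros m s Hs. apply D1, Hs.
    - intros m s Hs. apply B, Hs.
    - apply Ein.
    - intros s Hs. apply (ex_series_dom _ _ (fun m => proj1 (B n m s Hs)) (Ein n)). }
  assert (I12 : forall n t, lo < t < hi ->
     is_derive (fun z => Series (fun m => G1 n m z)) t (Series (fun m => G2 n m t))).
  { intros n t Ht. apply (series_derive (fun m z => G1 n m z) (fun m z => G2 n m z) (fun m => K * q^n * q^m) lo hi t Ht).
    - intros m s Hs. apply D2, Hs.
    - intros m s Hs. apply B, Hs.
    - apply Ein.
    - intros s Hs. apply (ex_series_dom _ _ (fun m => proj1 (proj2 (B n m s Hs))) (Ein n)). }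
  split.
  - apply (series_derive (fun n z => Series (fun m => G0 n m z)) (fun n z => Series (fun m => G1 n m z))
             (fun n => K * q^n / (1 - q)) lo hi z Hz).
    + intros n s Hs. apply I01, Hs.
    + intros n s Hs. apply (Binner G1 n s Hs). intros m. apply B, Hs.
    + exact Eout.
    + intros s Hs. apply (ex_series_dom _ (fun n => K * q^n / (1 - q))); [|exact Eout].
      intros n. apply (Binner G0 n s Hs). intros m. apply B, Hs.
  - apply (series_derive (fun n z => Series (fun m => G1 n m z)) (fun n z => Series (fun m => G2 n m z))
             (fun n => K * q^n / (1 - q)) lo hi z Hz).
    + intros n s Hs. apply I12, Hs.
    + intros n s Hs. apply (Binner G2 n s Hs). intros m. apply B, Hs.
    + exact Eout.
    + intros s Hs. apply (ex_series_dom _ (fun n => K * q^n / (1 - q))); [|exact Eout].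
      intros n. apply (Binner G1 n s Hs). intros m. apply B, Hs.
Qed.

Lemma nonmain_of (n m : nat) : ~ ((n = 0 /\ m = 0) \/ (n = 1 /\ m = 0) \/ (n = 0 /\ m = 1))%nat ->
  nonmain (z_enum n) (z_enum m).
Proof.
  intros H Hm. apply H.
  destruct (z_enum_spec n) as [_ [Hn0 Hn1]]. destruct (z_enum_spec m) as [_ [Hm0 Hm1]].
  destruct Hm as [[X Y]|[[X Y]|[X Y]]].
  - left. split; auto.
  - right; left. split; auto.
  - right; right. split; auto.
Qed.

Lemma locally_interval (lo hi y : R) : lo < y < hi -> locally y (fun t => lo < t < hi).
Proof.
  intros Hy.
  assert (He : 0 < Rmin (y - lo) (hi - y)) by (apply Rmin_pos; lra).
  exists (mkposreal _ He). intros t Ht.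
  unfold ball in Ht; simpl in Ht; unfold AbsRing_ball, abs, minus, plus, opp in Ht; simpl in Ht.
  apply Rabs_def2 in Ht. destruct Ht.
  assert (Rmin (y - lo) (hi - y) <= y - lo) by apply Rmin_l.
  assert (Rmin (y - lo) (hi - y) <= hi - y) by apply Rmin_r. lra.
Qed.

Lemma final_numeric (a e C r : R) : 6 * 3.14 <= a -> 0 < e -> 0 <= C <= 640 / 256 -> 0 < r <= 42/100 ->
  e * (- (15/100) * a) + e * (- (15/100) * a) + e * (- (15/100) * a)
  + e * C * r^2 / (1 - r) + e * C * r^2 / (1 - r) + e * C * r^2 / (1 - r) / (1 - r) < 0.
Proof.
  intros Ha He HC Hr.
  set (u := / (1 - r)).
  assert (Hu : u * (1 - r) = 1) by (unfold u; field; lra).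
  assert (Hu0 : 0 < u) by (unfold u; apply Rinv_0_lt_compat; lra).
  assert (Hu1 : u <= 100/58) by (unfold u; replace (100/58) with (/ (58/100)) by field; apply Rinv_le_contravar; lra).
  replace (e * C * r^2 / (1 - r) / (1 - r)) with (e * (C * r^2 * u * u)) by (unfold u; field; lra).
  replace (e * C * r^2 / (1 - r)) with (e * (C * r^2 * u)) by (unfold u; field; lra).
  clearbody u.
  assert (Hr2 : r^2 <= (42/100)^2) by (apply pow_incr; lra).
  assert (0 <= r^2) by apply pow2_ge_0.
  assert (C * r^2 <= 640/256 * (42/100)^2) by (apply Rmult_le_compat; lra).
  assert (0 <= C * r^2) by nra.
  assert (C * r^2 * u <= 640/256 * (42/100)^2 * (100/58)) by (apply Rmult_le_compat; lra).
  assert (0 <= C * r^2 * u) by nra.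
  assert (C * r^2 * u * u <= 640/256 * (42/100)^2 * (100/58) * (100/58)) by (apply Rmult_le_compat; lra).
  assert (X : - (45/100) * a + 2 * (C * r^2 * u) + C * r^2 * u * u < 0) by lra.
  replace (e * (- (15/100) * a) + e * (- (15/100) * a) + e * (- (15/100) * a)
    + e * (C * r^2 * u) + e * (C * r^2 * u) + e * (C * r^2 * u * u))
    with (e * (- (45/100) * a + 2 * (C * r^2 * u) + C * r^2 * u * u)) by field.
  nra.
Qed.

Theorem mainTheorem16 (alpha : R) (halpha : 6 <= alpha) (y : R)
  (hy1 : sqrt 3 / 2 <= y) (hy2 : y <= sqrt 3 / 2 + 1 / (3 * sqrt alpha)) :
  ex_derive_n (f_alpha alpha) 2 y /\ Derive_n (f_alpha alpha) 2 y < 0.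
Proof.
  set (c := - PI * alpha). set (a := PI * alpha).
  pose proof PI_ge as Hpi.
  assert (Ha : 6 * PI <= a) by (unfold a; nra).
  assert (Hc : c = - a) by (unfold c, a; ring).
  set (s := sqrt 3) in *. set (t := sqrt alpha) in *.
  assert (Hs : s * s = 3) by (apply sqrt_sqrt; lra).
  assert (Hs0 : 0 <= s) by apply sqrt_pos.
  assert (Hsb : 1732/1000 <= s <= 17321/10000) by (split; nra).
  assert (Ht : t * t = alpha) by (apply sqrt_sqrt; lra).
  assert (Ht0 : 0 <= t) by apply sqrt_pos.
  assert (Htb : 2449/1000 <= t) by nra.
  assert (Hinv : 1 / (3 * t) <= 1000 / 7347).
  { replace (1000/7347) with (1 / (7347/1000)) by field.
    unfold Rdiv. rewrite !Rmult_1_l. apply Rinv_le_contravar; lra. }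
  assert (Hyb : 17/20 < y < 101/100) by lra.
  assert (Hyh : y <= 10022/10000) by lra.
  set (lo := 17/20) in *. set (hi := 101/100) in *.
  set (G0 := fun n m z => g0 c (z_enum n) (z_enum m) z).
  set (G1 := fun n m z => g1 c (z_enum n) (z_enum m) z).
  set (G2 := fun n m z => g2 c (z_enum n) (z_enum m) z).
  pose proof rho_bound as [Hr0 Hr1].
  assert (Hq : 0 <= rho < 1) by lra.
  assert (DC := double_C2 G0 G1 G2 (KK a) rho lo hi Hq).
  assert (Hd1 : forall n m z, lo < z < hi -> is_derive (G0 n m) z (G1 n m z)).
  { intros n m z Hz. unfold G0, G1. apply g_d1. unfold lo in Hz; lra. }
  assert (Hd2 : forall n m z, lo < z < hi -> is_derive (G1 n m) z (G2 n m z)).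
  { intros n m z Hz. unfold G1, G2. apply g_d2. unfold lo in Hz; lra. }
  assert (HB : forall n m z, lo < z < hi -> Rabs (G0 n m z) <= KK a * rho^n * rho^m /\
      Rabs (G1 n m z) <= KK a * rho^n * rho^m /\ Rabs (G2 n m z) <= KK a * rho^n * rho^m).
  { intros n m z Hz. unfold G0, G1, G2. apply maj_bound; auto. unfold lo, hi in Hz; lra. }
  specialize (DC Hd1 Hd2 HB).
  set (F1 := fun z => Series (fun n => Series (fun m => G1 n m z))).
  set (F2 := fun z => Series (fun n => Series (fun m => G2 n m z))).
  assert (HF : forall z, lo < z < hi -> is_derive (f_alpha alpha) z (F1 z)).
  { intros z Hz. exact (proj1 (DC z Hz)). }
  assert (HF1 : forall z, lo < z < hi -> is_derive F1 z (F2 z)).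
  { intros z Hz. exact (proj2 (DC z Hz)). }
  assert (HD1 : is_derive (Derive_n (f_alpha alpha) 1) y (F2 y)).
  { apply (is_derive_ext_loc F1).
    - apply (filter_imp (fun t => lo < t < hi)); [|apply locally_interval; exact Hyb].
      intros z Hz. simpl. symmetry. apply is_derive_unique. apply HF, Hz.
    - apply HF1, Hyb. }
  split.
  - simpl. exists (F2 y). exact HD1.
  - change (Derive (Derive_n (f_alpha alpha) 1) y < 0).
    rewrite (is_derive_unique _ _ _ HD1).
    unfold F2.
    set (T := fun n m => G2 n m y).
    set (e := exp (- (a * hh y))).
    set (C := 640 * EE).
    pose proof EE_bound as [HE0 HE1].
    assert (He0 : 0 < e) by apply exp_pos.
    assert (Hyc : 17/20 <= y <= 101/100) by (unfold lo, hi in Hyb; lra).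
    assert (Hy0 : 0 < y) by lra.
    assert (NB : forall n m, nonmain (z_enum n) (z_enum m) -> Rabs (T n m) <= e * C * (rho^n * rho^m)).
    { intros n m Hnm. unfold T, G2.
      destruct (nonmain_bound a c n m y Ha Hc Hyc Hnm) as [_ [_ X]].
      unfold e, C. replace (exp (- (a * hh y)) * (640 * EE) * (rho ^ n * rho ^ m))
        with (exp (- (a * hh y)) * (640 * (EE * rho ^ n * rho ^ m))) by ring. exact X. }
    assert (MB : forall n m, ~ nonmain (z_enum n) (z_enum m) -> T n m <= e * (- (15/100) * a)).
    { intros n m Hm. unfold T, G2.
      destruct (main_vals c _ _ y Hm Hy0) as [_ [_ E2]]. rewrite E2.
      assert (Hc' : c = - (PI * alpha)) by (unfold c; ring).
      assert (Hee : exp (c * hh y) = e) by (unfold e; rewrite Hc; f_equal; ring).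
      rewrite Hee.
      pose proof (main_ineq y s (y - s/2) alpha Hs Hsb eq_refl ltac:(lra) Hyh) as MI.
      assert (H9 : 9 * alpha * (y - s/2)^2 <= 1).
      { assert (3 * t * (y - s/2) <= 1).
        { assert (y - s/2 <= 1 / (3 * t)) by lra.
          assert (0 < 3 * t) by lra.
          apply (Rmult_le_compat_l (3 * t)) in H; [|lra].
          replace (3 * t * (1 / (3 * t))) with 1 in H by (field; lra). exact H. }
        assert (0 <= 3 * t * (y - s/2)) by (apply Rmult_le_pos; lra).
        replace (9 * alpha * (y - s/2)^2) with ((3 * t * (y - s/2))^2) by (rewrite <- Ht; ring).
        nra. }
      specialize (MI H9 ltac:(lra)).
      rewrite Hc'. unfold h1, h2. fold a. fold a in MI.
      replace (e * (- (15/100) * a)) with ((- (15/100) * a) * e) by ring.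
      apply Rmult_le_compat_r; lra. }
    assert (Hm00 : ~ nonmain (z_enum 0) (z_enum 0)) by (unfold nonmain; intros H; apply H; left; split; reflexivity).
    assert (Hm01 : ~ nonmain (z_enum 0) (z_enum 1)) by (unfold nonmain; intros H; apply H; right; right; split; reflexivity).
    assert (Hm10 : ~ nonmain (z_enum 1) (z_enum 0)) by (unfold nonmain; intros H; apply H; right; left; split; reflexivity).
    assert (ER : forall n, ex_series (fun m => T n m)).
    { intros n. apply (ex_series_dom _ (fun m => KK a * rho^n * rho^m)); [|apply geom_ex, Hq].
      intros m. apply (HB n m y Hyb). }
    assert (ES : ex_series (fun n => Series (fun m => T n m))).
    { apply (ex_series_dom _ (fun n => KK a / (1 - rho) * rho^n)); [|apply geom_ex, Hq].
      intros n. replace (KK a / (1 - rho) * rho^n) with (Series (fun m => KK a * rho^n * rho^m)).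
      - apply abs_series_le; [intros m; apply (HB n m y Hyb)|apply geom_ex, Hq].
      - rewrite geom_S by exact Hq. field. lra. }
    assert (Hr2 : 0 < rho^2) by (apply pow_lt; lra).
    assert (R0 : Series (fun k => T 0%nat (S (S k))) <= e * C * rho^2 / (1 - rho)).
    { eapply Rle_trans; [apply Rle_abs|].
      replace (e * C * rho^2 / (1 - rho)) with (Series (fun k => e * C * rho^2 * rho^k)) by (apply geom_S, Hq).
      apply abs_series_le; [|apply geom_ex, Hq].
      intros k. eapply Rle_trans; [apply NB, nonmain_of; lia|]. simpl. lra. }
    assert (R1 : Series (fun k => T 1%nat (S k)) <= e * C * rho^2 / (1 - rho)).
    { eapply Rle_trans; [apply Rle_abs|].
      replace (e * C * rho^2 / (1 - rho)) with (Series (fun k => e * C * rho^2 * rho^k)) by (apply geom_S, Hq).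
      apply abs_series_le; [|apply geom_ex, Hq].
      intros k. eapply Rle_trans; [apply NB, nonmain_of; lia|]. simpl. lra. }
    assert (R2 : Series (fun k => Series (fun m => T (S (S k)) m)) <= e * C * rho^2 / (1 - rho) / (1 - rho)).
    { eapply Rle_trans; [apply Rle_abs|].
      replace (e * C * rho^2 / (1 - rho) / (1 - rho)) with (Series (fun k => e * C * rho^2 / (1 - rho) * rho^k)) by (apply geom_S, Hq).
      apply abs_series_le; [|apply geom_ex, Hq].
      intros k.
      replace (e * C * rho^2 / (1 - rho) * rho^k) with (Series (fun m => e * C * rho^(S (S k)) * rho^m)).
      - apply abs_series_le; [|apply geom_ex, Hq].
        intros m. eapply Rle_trans; [apply NB, nonmain_of; lia|]. right. ring.
      - rewrite geom_S by exact Hq. simpl. field. lra. }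
    change (Series (fun n => Series (fun m => T n m)) < 0).
    rewrite (Series_incr_1 _ ES).
    rewrite (Series_incr_1 (fun k => Series (fun m => T (S k) m))) by (apply (ex_series_incr_1 (fun n => Series (fun m => T n m))), ES).
    rewrite (Series_incr_1 (fun m => T 0%nat m) (ER 0%nat)).
    rewrite (Series_incr_1 (fun k => T 0%nat (S k))) by (apply (ex_series_incr_1 (fun m => T 0%nat m)), ER).
    rewrite (Series_incr_1 (fun m => T 1%nat m) (ER 1%nat)).
    pose proof (MB 0%nat 0%nat Hm00). pose proof (MB 0%nat 1%nat Hm01). pose proof (MB 1%nat 0%nat Hm10).
    assert (0 <= C <= 640/256) by (unfold C; lra).
    pose proof (final_numeric a e C rho ltac:(lra) He0 ltac:(lra) ltac:(lra)).
    lra.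
Qed.
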